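(* Let $G$ be a group and $S\subset G$ a finite generating set with $S\cap S^{-1}=\emptyset$. Assume that there are no $a,b,c\in S$ with $abc=e$ in $G$, and that $\langle S\mid R\rangle$ with $R=\{a\cdot b\cdot c^{-1}\mid a,b,c\in S,\ abc^{-1}=e \text{ in } G\}$ is a presentation of $G$. Then the action of $G$ on $Flag(G,S)$ by left multiplication is free.
   Context: For a group $G$ and a finite generating set $S\subset G$ with $S\cap S^{-1}=\emptyset$, the Cayley graph $\Gamma(G,S)$ has vertex set $\{v[g]\mid g\in G\}$ and, for each $g\in G$, $s\in S$, a directed edge from $v[g]$ to $v[gs]$; the underlying undirected graph is simple. $Flag(G,S)$ denotes the flag complex of $\Gamma(G,S)$ (a simplex for every finite set of pairwise adjacent vertices), on which $G$ acts by left multiplication. *)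

(* Defs.v *)
From Stdlib Require Import List.
Import ListNotations.

Record Group := {
  carrier :> Type;
  gmul : carrier -> carrier -> carrier;
  ginv : carrier -> carrier;
  gone : carrier;
  gmulA : forall x y z, gmul x (gmul y z) = gmul (gmul x y) z;
  gmul1l : forall x, gmul gone x = x;
  gmulVl : forall x, gmul (ginv x) x = gone
}.

Arguments gmul {G} : rename.
Arguments ginv {G} : rename.
Arguments gone {G} : rename.

Section Defs.
Variable G : Group.

(* Words in the letters S ∪ S^{-1}: (s, true) stands for s, (s, false) for s^{-1}. *)
Definition word := list (G * bool).

Definition letter_val (l : G * bool) : G :=
  if snd l then fst l else ginv (fst l).

Fixpoint eval (w : word) : G :=
  match w with
  | [] => gone
  | l :: w' => gmul (letter_val l) (eval w')
  end.

Definition word_over (S : list G) (w : word) : Prop :=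
  forall l, In l w -> In (fst l) S.

Definition generates (S : list G) : Prop :=
  forall g : G, exists w, word_over S w /\ eval w = g.

Definition relator (S : list G) (r : word) : Prop :=
  exists a b c, In a S /\ In b S /\ In c S /\
    gmul (gmul a b) (ginv c) = gone /\
    r = [(a, true); (b, true); (c, false)].

(* Equality in the group <S | R>: the congruence on words generated by
   free reductions and insertion/deletion of relators (i.e. equality in
   F(S) modulo the normal closure of R). *)
Inductive pres_eq (S : list G) (R : word -> Prop) : word -> word -> Prop :=
  | pe_refl w : pres_eq S R w w
  | pe_sym u v : pres_eq S R u v -> pres_eq S R v u
  | pe_trans u v w : pres_eq S R u v -> pres_eq S R v w -> pres_eq S R u w
  | pe_free u v x b : In x S ->
      pres_eq S R (u ++ v) (u ++ (x, b) :: (x, negb b) :: v)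
  | pe_rel u v r : R r -> pres_eq S R (u ++ v) (u ++ r ++ v).

Definition is_presentation (S : list G) (R : word -> Prop) : Prop :=
  generates S /\
  forall w, word_over S w -> eval w = gone -> pres_eq S R w [].

(* Adjacency in the underlying undirected graph of the Cayley graph Γ(G,S):
   edge v[g] -> v[g s] for s in S. *)
Definition cayley_adj (S : list G) (x y : G) : Prop :=
  In (gmul (ginv x) y) S \/ In (gmul (ginv y) x) S.

Definition flag_simplex (S : list G) (sigma : list G) : Prop :=
  sigma <> [] /\
  forall x y, In x sigma -> In y sigma -> x <> y -> cayley_adj S x y.

Definition flag_action_free (S : list G) : Prop :=
  forall (g : G) (sigma : list G), flag_simplex S sigma ->
    (forall x, In x sigma -> In (gmul g x) sigma) ->
    (forall y, In y sigma -> exists x, In x sigma /\ y = gmul g x) ->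
    g = gone.

End Defs.

(* Main.v *)
Require Import Defs.
From Stdlib Require Import List Arith Lia Classical FinFun.
Import ListNotations.

Section GT.
Variable G : Group.

Lemma mulV (x : G) : gmul x (ginv x) = gone.
Proof.
  rewrite <- (gmul1l G (gmul x (ginv x))).
  rewrite <- (gmulVl G (ginv x)) at 1.
  rewrite <- gmulA, (gmulA _ (ginv x) x (ginv x)), gmulVl, gmul1l.
  apply gmulVl.
Qed.

Lemma mul1r (x : G) : gmul x gone = x.
Proof. rewrite <- (gmulVl G x), gmulA, mulV. apply gmul1l. Qed.

Lemma cancel_l (a b c : G) : gmul a b = gmul a c -> b = c.
Proof.
  intro H. rewrite <- (gmul1l G b), <- (gmul1l G c), <- (gmulVl G a),
    <- !gmulA, H. reflexivity.
Qed.

Lemma inv_uniq (a b : G) : gmul a b = gone -> b = ginv a.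
Proof. intro H. apply (cancel_l a). rewrite H, mulV. reflexivity. Qed.

Lemma inv_inv (x : G) : ginv (ginv x) = x.
Proof. symmetry. apply inv_uniq. apply gmulVl. Qed.

Lemma inv1 : ginv (@gone G) = gone.
Proof. symmetry. apply inv_uniq. apply gmul1l. Qed.

Lemma inv_mul (x y : G) : ginv (gmul x y) = gmul (ginv y) (ginv x).
Proof.
  symmetry. apply inv_uniq.
  rewrite <- gmulA, (gmulA _ y (ginv y) (ginv x)), mulV, gmul1l. apply mulV.
Qed.

Lemma mid (a x b : G) : gmul (gmul a x) (gmul (ginv x) b) = gmul a b.
Proof. rewrite <- gmulA, (gmulA _ x (ginv x) b), mulV, gmul1l. reflexivity. Qed.

Fixpoint gpow (g : G) (k : nat) : G :=
  match k with 0 => gone | S k => gmul g (gpow g k) end.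

Lemma gpow_add g i j : gpow g (i + j) = gmul (gpow g i) (gpow g j).
Proof.
  induction i; simpl. now rewrite gmul1l. now rewrite IHi, gmulA.
Qed.

Definition cc (g x : G) k := gmul (ginv x) (gmul (gpow g k) x).

Lemma cc_add g x i j : cc g x (i + j) = gmul (cc g x i) (cc g x j).
Proof.
  unfold cc. rewrite (gmulA _ (ginv x) (gpow g i) x), mid, gpow_add, !gmulA.
  reflexivity.
Qed.

Lemma cc1 g x : cc g x 1 = gmul (ginv x) (gmul g x).
Proof. unfold cc; simpl. now rewrite mul1r. Qed.

Lemma core (S0 : list G)
  (HSinv : forall s t, In s S0 -> In t S0 -> s <> ginv t)
  (Hnotri : forall a b c, In a S0 -> In b S0 -> In c S0 ->
              gmul (gmul a b) c <> gone)
  (sigma : list G) (Hs : flag_simplex G S0 sigma) (g x : G)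
  (Hx : In x sigma) (Hst : forall y, In y sigma -> In (gmul g y) sigma)
  (Hh : In (gmul (ginv x) (gmul g x)) S0) : False.
Proof.
  set (f := fun k => gmul (gpow g k) x).
  assert (Hf : forall k, In (f k) sigma).
  { induction k; unfold f in *; simpl. now rewrite gmul1l.
    rewrite <- gmulA. now apply Hst. }
  assert (Q : forall k j, 1 <= j <= S k -> In (cc g x j) S0 /\ cc g x j <> gone).
  { induction k; intros j Hj.
    - assert (j = 1) by lia; subst. rewrite cc1. split; auto.
      intro E. apply (HSinv _ _ Hh Hh). rewrite E, inv1. reflexivity.
    - destruct (Nat.le_gt_cases j (S k)) as [Hle|Hgt]. apply IHk; lia.
      assert (j = S (S k)) by lia; subst.
      destruct (IHk 1 ltac:(lia)) as [H1 _].
      destruct (IHk (S k) ltac:(lia)) as [Hk _].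
      destruct (classic (cc g x (S (S k)) = gone)) as [E|NE].
      + exfalso. replace (S (S k)) with (S k + 1) in E by lia.
        rewrite cc_add in E. apply inv_uniq in E.
        exact (HSinv _ _ H1 Hk E).
      + split; auto.
        assert (Hne : x <> f (S (S k))).
        { intro E. apply NE. unfold cc. fold (f (S (S k))). rewrite <- E.
          apply gmulVl. }
        destruct (proj2 Hs _ _ Hx (Hf (S (S k))) Hne) as [A|A]; [exact A|].
        exfalso.
        assert (Eq : gmul (ginv (f (S (S k)))) x = ginv (cc g x (S (S k)))).
        { unfold cc, f. rewrite (inv_mul (ginv x)), inv_inv. reflexivity. }
        rewrite Eq in A.
        apply (Hnotri _ _ _ H1 Hk A).
        change (S (S k)) with (1 + S k) in *. rewrite <- cc_add. apply mulV. }
  assert (Inj : forall i j, f i = f j -> i = j).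
  { assert (Hl : forall i m, f i = f (i + m) -> m = 0).
    { intros i m E. destruct m as [|m]; auto. exfalso.
      assert (Ec : cc g x i = cc g x (i + S m)) by (unfold cc; fold (f i); fold (f (i + S m)); now rewrite E).
      rewrite cc_add in Ec. rewrite <- (mul1r (cc g x i)) in Ec at 1.
      apply cancel_l in Ec. destruct (Q m (S m) ltac:(lia)). auto. }
    intros i j E. destruct (Nat.lt_total i j) as [L|[L|L]]; auto.
    - replace j with (i + (j - i)) in E by lia. apply Hl in E. lia.
    - symmetry in E. replace i with (j + (i - j)) in E by lia. apply Hl in E. lia. }
  assert (ND : NoDup (map f (seq 0 (S (length sigma))))).
  { apply FinFun.Injective_map_NoDup. exact Inj. apply seq_NoDup. }
  apply NoDup_incl_length with (l' := sigma) in ND.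
  - rewrite length_map, length_seq in ND. lia.
  - intros y Hy. apply in_map_iff in Hy. destruct Hy as [k [<- _]]. apply Hf.
Qed.

End GT.

Theorem mainTheorem2 (G : Group) (S : list G)
  (HSinv : forall s t, In s S -> In t S -> s <> ginv t)
  (Hnotri : forall a b c, In a S -> In b S -> In c S ->
              gmul (gmul a b) c <> gone)
  (Hpres : is_presentation G S (relator G S)) :
  flag_action_free G S.
Proof.
  intros g sigma Hs Hst Hsur.
  destruct (classic (g = gone)) as [E|NE]; auto. exfalso.
  destruct sigma as [|x rest] eqn:Esig; [now destruct Hs|].
  rewrite <- Esig in *.
  assert (Hx : In x sigma) by (rewrite Esig; left; auto).
  assert (Hne : x <> gmul g x).
  { intro E. apply NE. rewrite <- (mul1r G g), <- (mulV G x) at 1.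
    rewrite gmulA, <- E. apply mulV. }
  destruct (proj2 Hs _ _ Hx (Hst _ Hx) Hne) as [A|A].
  - exact (core G S HSinv Hnotri sigma Hs g x Hx Hst A).
  - apply (core G S HSinv Hnotri sigma Hs (ginv g) x Hx).
    + intros y Hy. destruct (Hsur y Hy) as [z [Hz ->]].
      rewrite gmulA, gmulVl, gmul1l. exact Hz.
    + rewrite inv_mul, <- gmulA in A. exact A.
Qed.
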